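(* Let $\mathcal{C}$ be a graph class that is locally almost near-covered with respect to functions $k,m:\mathbb{N}\to\mathbb{N}$, and set $t:=m(2)\cdot k(2)+m(2)+1$. Then no graph in $\mathcal{C}$ contains a half-graph of order $t$ as a semi-induced subgraph.
   Context: $N^G(v)$ is the set of neighbors of $v$; $N_r^G(v)$ is the closed $r$-neighborhood of $v$ (vertices at distance at most $r$, including $v$). Two vertices are $k$-near-twins in $G$ if $|N^G(u)\,\Delta\,N^G(v)|\le k$. $G$ is $(k,m)$-near-covered if every set of vertices that are pairwise not $k$-near-twins has size at most $m$. $\mathcal{C}$ is locally almost near-covered with respect to $k,m$ if for every $r$, every $G\in\mathcal{C}$ and every $v\in V(G)$, the induced subgraph $G[N_r^G(v)]$ is $(k(r),m(r))$-near-covered. $G$ contains a half-graph of order $t$ as a semi-induced subgraph if there are distinct vertices $u_1,\dots,u_t,w_1,\dots,w_t$ of $G$ with $u_iw_j\in E(G)$ iff $i\le j$ (other edges arbitrary). *)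

(* Defs.v *)
From mathcomp Require Import all_boot.
Set Implicit Arguments. Unset Strict Implicit. Unset Printing Implicit Defensive.

Definition simple_graph (T : finType) (e : rel T) : Prop :=
  symmetric e /\ irreflexive e.

Definition graph_class := forall T : finType, rel T -> Prop.

(* Neighbourhood of v in the induced subgraph G[S]: N^{G[S]}(v) = N^G(v) ∩ S *)
Definition nbr_in (T : finType) (e : rel T) (S : {set T}) (v : T) : {set T} :=
  [set u in S | e v u].

Definition near_twins_in (T : finType) (e : rel T) (S : {set T}) (k : nat)
  (u v : T) : bool :=
  #|(nbr_in e S u :\: nbr_in e S v) :|: (nbr_in e S v :\: nbr_in e S u)| <= k.

Definition near_covered_in (T : finType) (e : rel T) (S : {set T})
  (k m : nat) : Prop :=
  forall X : {set T}, X \subset S ->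
    (forall u v, u \in X -> v \in X -> u != v -> ~~ near_twins_in e S k u v) ->
    #|X| <= m.

Fixpoint ball (T : finType) (e : rel T) (r : nat) (v : T) : {set T} :=
  match r with
  | 0 => [set v]
  | r'.+1 => ball e r' v :|: [set u | [exists w in ball e r' v, e w u]]
  end.

Definition locally_almost_near_covered (C : graph_class) (k m : nat -> nat)
  : Prop :=
  forall (r : nat) (T : finType) (e : rel T), C T e ->
    forall v : T, near_covered_in e (ball e r v) (k r) (m r).

(* G contains a half-graph of order t as a semi-induced subgraph:
   distinct vertices u_1..u_t, w_1..w_t with u_i w_j in E iff i <= j
   (indices taken in 'I_t, i.e. 0..t-1). *)
Definition has_semi_induced_half_graph (T : finType) (e : rel T) (t : nat)
  : Prop :=
  exists (u w : 'I_t -> T),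
    [/\ injective u, injective w,
        (forall i j, u i != w j) &
        (forall i j, e (u i) (w j) = (i <= j)%N)].

(* Main.v *)
Require Import Defs.
From mathcomp Require Import all_boot.
From mathcomp Require Import zify.

Lemma not_twins (T : finType) (e : rel T) (t K : nat) (u w : 'I_t -> T)
  (S : {set T}) :
  injective w -> (forall i j, e (u i) (w j) = (i <= j)%N) ->
  (forall j, w j \in S) ->
  forall a b : 'I_t, (a + K < b)%N -> ~~ near_twins_in e S K (u a) (u b).
Proof.
move=> wI E wS a b hab.
have gP : forall j : 'I_K.+1, (a + j < t)%N.
  move=> j; have := ltn_ord j; have := ltn_ord b; lia.
pose g := fun j => Ordinal (gP j).
have gI : injective g.
  move=> x y /(congr1 val) /= h; apply: val_inj => /=; lia.
rewrite /near_twins_in -ltnNge.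
apply: (@leq_trans #|[set w (g j) | j : 'I_K.+1]|).
  rewrite card_imset ?card_ord //; exact: inj_comp.
apply: subset_leq_card; apply/subsetP => x /imsetP [j _ ->].
rewrite in_setU; apply/orP; left.
rewrite in_setD !inE wS !E /=.
have := ltn_ord j; rewrite leq_addr andbT -ltnNge; lia.
Qed.

Theorem lemma5p12 (C : graph_class) (k m : nat -> nat) :
  locally_almost_near_covered C k m ->
  forall (T : finType) (e : rel T), simple_graph e -> C T e ->
    ~ has_semi_induced_half_graph e (m 2 * k 2 + m 2 + 1).
Proof.
move=> H T e [esym eirr] CT [u [w [uI wI uw E]]].
move: u w uI wI uw E.
set M := m 2; set K := k 2; set t := M * K + M + 1.
move=> u w uI wI uw E.
have tP : (t.-1 < t)%N by rewrite /t; lia.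
have t0 : (0 < t)%N by rewrite /t; lia.
pose v := w (Ordinal tP).
have Hc := H 2 T e CT v.
set S := ball e 2 v in Hc.
have b1 : forall x, x \in ball e 1 v -> x \in S.
  by move=> x hx; rewrite /S /= in_setU -/(ball e 1 v) hx.
have uS1 : forall i, u i \in ball e 1 v.
  move=> i; rewrite /= in_setU; apply/orP; right; rewrite inE.
  apply/existsP; exists v; rewrite /= in_set1 eqxx /= /v esym E /=.
  have := ltn_ord i; lia.
have wS : forall j, w j \in S.
  move=> j; rewrite /S /= in_setU; apply/orP; right; rewrite inE.
  apply/existsP; exists (u (Ordinal t0)); rewrite -/(ball e 1 v) uS1 E /=.
  by [].
have fP : forall i : 'I_M.+1, (i * K.+1 < t)%N.
  move=> i; have := ltn_ord i; rewrite /t => hi.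
  have : (i * K.+1 <= M * K.+1)%N by rewrite leq_mul2r; lia.
  lia.
pose f := fun i => Ordinal (fP i).
have fI : injective f.
  move=> x y /(congr1 val) /= /eqP; rewrite eqn_pmul2r // => /eqP h.
  exact: val_inj.
have := Hc [set u (f i) | i : 'I_M.+1].
rewrite card_imset ?card_ord; last exact: inj_comp.
rewrite ltnn => h; suff: false by []; apply: h.
  by apply/subsetP => x /imsetP [i _ ->]; apply: b1.
move=> x y /imsetP [i _ ->] /imsetP [j _ ->] hne.
have hij : i != j by apply: contra hne => /eqP ->.
have key : forall a b : 'I_M.+1, (a < b)%N ->
    ((f a) + K < f b)%N.
  move=> a b hab /=.
  have : (a * K.+1 + K.+1 <= b * K.+1)%N.
    by rewrite -mulSnr leq_mul2r hab orbT.
  lia.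
case: (ltngtP i j) => [lt|gt|eq].
- exact: (@not_twins T e t K u w S wI E wS _ _ (key _ _ lt)).
- rewrite /near_twins_in setUC.
  exact: (@not_twins T e t K u w S wI E wS _ _ (key _ _ gt)).
- by move: hij; rewrite (val_inj eq) eqxx.
Qed.
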